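(* Let $S=(s_{ij})$ and $C=(c_{ij})$ be real $n\times n$ matrices with spectra (counted with multiplicities) $\sigma(S)=(\lambda_1,\ldots,\lambda_n)$ and $\sigma(C)=(\mu_1,\ldots,\mu_n)$, and let $0\le\gamma\le 1$. Suppose $|c_{ij}|\le s_{ij}$ for all $1\le i,j\le n$ (equivalently, $S$, $S+C$ and $S-C$ are entrywise nonnegative). Then $\tfrac12(S+\gamma C)$ and $\tfrac12(S-\gamma C)$ are nonnegative, and the $2n\times 2n$ block matrices $M_{\pm\gamma}=(M_{ij,\pm\gamma})_{i,j=1}^n$ with $$M_{ij,\pm\gamma}=\begin{pmatrix}\frac{s_{ij}\pm\gamma c_{ij}}{2} & \frac{s_{ij}\mp\gamma c_{ij}}{2}\\ \frac{s_{ij}\mp\gamma c_{ij}}{2} & \frac{s_{ij}\pm\gamma c_{ij}}{2}\end{pmatrix}$$ are nonnegative and realize, respectively, the lists $(\lambda_1,\ldots,\lambda_n,\gamma\mu_1,\ldots,\gamma\mu_n)$ (for $M_{+\gamma}$) and $(\lambda_1,\ldots,\lambda_n,-\gamma\mu_1,\ldots,-\gamma\mu_n)$ (for $M_{-\gamma}$).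
   Context: A matrix realizes a list of complex numbers if the list is its spectrum counted with multiplicities. Nonnegative means entrywise nonnegative. *)

(* Defs.v *)
From HB Require Import structures.
From mathcomp Require Import all_boot all_order all_algebra.
From mathcomp Require Import complex.
From mathcomp Require Import reals.
Set Implicit Arguments. Unset Strict Implicit. Unset Printing Implicit Defensive.
Import Order.TTheory GRing.Theory Num.Theory.
Local Open Scope ring_scope.
Local Open Scope complex_scope.

Definition nonneg_mx (R : numDomainType) m n (A : 'M[R]_(m, n)) : Prop :=
  forall i j, 0 <= A i j.

(* A real square matrix realizes a list of complex numbers iff the list is its
   spectrum counted with multiplicities, i.e. the characteristic polynomial of
   the matrix (viewed over R[i]) is  prod_{z in l} (X - z). *)
Definition realizes (R : rcfType) n (A : 'M[R]_n) (l : seq R[i]) : Prop :=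
  char_poly (map_mx (fun x : R => x%:C) A) = \prod_(z <- l) ('X - z%:P).

Lemma block_idx_proof n (r : 'I_(n * 2)) : (r %/ 2 < n)%N.
Proof. by rewrite ltn_divLR // ltn_ord. Qed.

Definition block_idx n (r : 'I_(n * 2)) : 'I_n := Ordinal (block_idx_proof r).

(* block_mx2 S C g : the 2n x 2n matrix with (i,j) 2x2 block
     [ (s_ij + g c_ij)/2   (s_ij - g c_ij)/2 ]
     [ (s_ij - g c_ij)/2   (s_ij + g c_ij)/2 ],
   rows/columns ordered (1,1),(1,2),(2,1),(2,2),...,(n,1),(n,2).
   M_{+gamma} = block_mx2 S C gamma,  M_{-gamma} = block_mx2 S C (- gamma). *)
Definition block_mx2 (R : fieldType) n (S C : 'M[R]_n) (g : R) : 'M[R]_(n * 2) :=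
  \matrix_(r, c)
    if (r %% 2 == c %% 2)%N
    then (S (block_idx r) (block_idx c) + g * C (block_idx r) (block_idx c)) / 2
    else (S (block_idx r) (block_idx c) - g * C (block_idx r) (block_idx c)) / 2.

(* Main.v *)
Require Import Defs.
From HB Require Import structures.
From mathcomp Require Import all_boot all_order all_algebra.
From mathcomp Require Import complex.
From mathcomp Require Import reals.
From mathcomp Require Import zify ring lra.
Import Order.TTheory GRing.Theory Num.Theory.
Set Implicit Arguments. Unset Strict Implicit. Unset Printing Implicit Defensive.
Local Open Scope ring_scope.

Lemma idx_proof n (i : 'I_n) (a : 'I_2) : (i * 2 + a < n * 2)%N.
Proof. have := ltn_ord i; have := ltn_ord a; lia. Qed.
Definition idx n (i : 'I_n) (a : 'I_2) : 'I_(n * 2) := Ordinal (idx_proof i a).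

Lemma bi_idx n (i : 'I_n) a : block_idx (idx i a) = i.
Proof.
apply: val_inj => /=; rewrite divnMDl // divn_small ?addn0 //.
Qed.
Lemma mod_idx n (i : 'I_n) (a : 'I_2) : ((idx i a) %% 2 = a)%N.
Proof. by rewrite /= modnMDl modn_small. Qed.

Lemma sum_blocks (V : nmodType) n (F : 'I_(n * 2) -> V) :
  \sum_c F c = \sum_(i < n) (F (idx i ord0) + F (idx i ord_max)).
Proof.
pose G c := if insub c is Some k then F k else 0.
have HG k : G (val k) = F k by rewrite /G valK.
transitivity (\sum_(c < n * 2) G c); first by apply: eq_bigr => k _; rewrite HG.
rewrite -(big_mkord xpredT) big_nat_mul big_mkord; apply: eq_bigr => i _.
by rewrite mulSnr addn2 big_ltn // big_ltn // big_geq // /= addr0 -!HG /= addn0 addn1.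


Qed.

Definition Pm (R : pzRingType) n (f : nat -> R) : 'M[R]_(n * 2, n) :=
  \matrix_(r, k) ((block_idx r == k)%:R * f (r %% 2)%N).

Lemma Pm_mulr (R : comPzRingType) n (M : 'M[R]_(n * 2)) f :
  M *m Pm n f = \matrix_(r, j) (M r (idx j ord0) * f 0%N + M r (idx j ord_max) * f 1%N).
Proof.
apply/matrixP => r j; rewrite !mxE sum_blocks (bigD1 j) //= big1 => [|i hij].
  by rewrite !mxE !bi_idx !mod_idx eqxx !mul1r addr0.
by rewrite !mxE !bi_idx (negbTE hij) !mul0r !mulr0 addr0.
Qed.

Lemma Pm_mull (R : comPzRingType) n (X : 'M[R]_n) f :
  Pm n f *m X = \matrix_(r, j) (f (r %% 2)%N * X (block_idx r) j).
Proof.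
apply/matrixP => r j; rewrite !mxE (bigD1 (block_idx r)) //= big1 => [|i hij].
  by rewrite !mxE eqxx mul1r addr0.
by rewrite !mxE eq_sym (negbTE hij) !mul0r.
Qed.

Lemma Pm_tr (R : comPzRingType) n (f h : nat -> R) :
  (Pm n f)^T *m Pm n h = (f 0%N * h 0%N + f 1%N * h 1%N)%:M.
Proof.
apply/matrixP => j k; rewrite !mxE sum_blocks (bigD1 j) //= big1 => [|i hij].
  rewrite !mxE !bi_idx !mod_idx eqxx !mul1r addr0.
  by case: eqP => _ /=; rewrite ?mul1r ?mul0r ?mulr0 ?addr0 ?mulr1n ?mulr0n.
by rewrite !mxE !bi_idx (negbTE hij) !mul0r addr0.
Qed.

Lemma char_poly_sim (F : fieldType) m k (e : k = m) (M : 'M[F]_m)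
   (P : 'M[F]_(m, k)) (Q : 'M[F]_(k, m)) (D : 'M[F]_k) :
  Q *m P = 1%:M -> M *m P = P *m D -> char_poly M = char_poly D.
Proof.
case: m / e in M P Q * => QP MP.
have [_ uP] := mulmx1_unit QP.
pose Pc := map_mx polyC P.
have E : char_poly_mx M *m Pc = Pc *m char_poly_mx D.
  rewrite /char_poly_mx mulmxBl mulmxBr mul_scalar_mx mul_mx_scalar.
  by rewrite -!map_mxM MP.
have := congr1 determinant E; rewrite !det_mulmx mulrC; apply: mulfI.
by rewrite det_map_mx polyC_eq0 -unitfE -unitmxE.
Qed.

Lemma char_poly_block (F : fieldType) n1 n2 (A : 'M[F]_n1) (B : 'M[F]_n2) :
  char_poly (block_mx A 0 0 B) = char_poly A * char_poly B.
Proof.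
rewrite /char_poly /char_poly_mx map_block_mx scalar_mx_block opp_block_mx.
by rewrite add_block_mx !map_mx0 !subr0 det_ublock.
Qed.

Lemma prod_X (R : comPzRingType) (T : Type) (l : seq T) (c : R) : \prod_(z <- l) c = c ^+ size l.
Proof. by elim: l => [|z l IH]; rewrite ?big_nil ?big_cons ?IH ?exprS. Qed.

Lemma char_polyZ (F : fieldType) n (a : F) (A : 'M[F]_n) l :
  char_poly A = \prod_(z <- l) ('X - z%:P) ->
  char_poly (a *: A) = \prod_(z <- l) ('X - (a * z)%:P).
Proof.
move=> HA.
have sl : size l = n.
  by have := size_char_poly A; rewrite HA size_prod_XsubC => -[].
have [->|a0] := eqVneq a 0.
  rewrite scale0r.
  under eq_bigr do rewrite mul0r subr0.
  rewrite prod_X sl /char_poly /char_poly_mx map_mx0 subr0 det_scalar //.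
pose q : {poly F} := a^-1 *: 'X.
have E : char_poly_mx (a *: A) = a%:P *: map_mx (comp_poly q) (char_poly_mx A).
  apply/matrixP => i j; rewrite !mxE.
  case: eqP => _ /=; rewrite ?mulr1n ?mulr0n.
    rewrite comp_polyB comp_polyX comp_polyC /q.
    by rewrite mulrBr mul_polyC scalerA mulfV // scale1r polyCM.
  by rewrite comp_polyB comp_poly0 comp_polyC !sub0r mulrN -polyCM.
rewrite /char_poly E detZ det_map_mx -/(char_poly A) HA rmorph_prod /=.
rewrite -sl -prod_X -big_split /=; apply: eq_bigr => z _.
by rewrite comp_polyB comp_polyX comp_polyC /q mulrBr mul_polyC scalerA mulfV // scale1r polyCM.
Qed.

Lemma block_char (R : numFieldType) n (S C : 'M[R]_n) g :
  char_poly (block_mx2 S C g) = char_poly S * char_poly (g *: C).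
Proof.
set M := block_mx2 S C g.
pose one := fun _ : nat => (1 : R).
pose sg := fun a : nat => if a == 0%N then (1:R) else -1.
pose P := row_mx (Pm n one) (Pm n sg).
pose Q := (2%:R : R)^-1 *: P^T.
rewrite -char_poly_block.
apply: (@char_poly_sim _ _ _ (etrans (addnn n) (esym (muln2 n))) _ P Q).
- rewrite /Q -scalemxAl tr_row_mx mul_col_row !Pm_tr /one /sg /=.
  have z0 : (0:R)%:M = 0 :> 'M_n by apply/matrixP=> i j; rewrite !mxE mul0rn.
  rewrite !mulr1 !mul1r mulrNN mulr1 addrN z0.
  rewrite -scalar_mx_block scale_scalar_mx mulVf //.
  by rewrite pnatr_eq0.
- rewrite /P mul_mx_row mul_row_block !mulmx0 addr0 add0r; congr row_mx;
  apply/matrixP => r j; rewrite Pm_mulr Pm_mull !mxE !bi_idx !mod_idx /one /sg /=;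
  have : (r %% 2 < 2)%N by rewrite ltn_pmod.
  + by case: (r %% 2)%N => [|[|]] //= _; rewrite !mulr1; field.
  + by case: (r %% 2)%N => [|[|]] //= _; rewrite !mulr1; field.
Qed.
Local Open Scope complex_scope.

Lemma realize_block (R : realType) n (S C : 'M[R]_n) (lam mu : seq R[i]) (g : R) :
  realizes S lam -> realizes C mu ->
  realizes (block_mx2 S C g) (lam ++ [seq g%:C * z | z <- mu]).
Proof.
rewrite /realizes => HS HC.
rewrite -map_char_poly block_char rmorphM /= !map_char_poly map_mxZ HS.
by rewrite (char_polyZ _ HC) big_cat big_map.
Qed.

Lemma pm_nonneg (R : realType) (s c g : R) : `|c| <= s -> `|g| <= 1 ->
  0 <= s + g * c /\ 0 <= s - g * c.
Proof.
move=> hc hg.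
have h : `|g * c| <= s.
  rewrite normrM (le_trans _ hc) // -[leRHS]mul1r ler_wpM2r //.
move: h; rewrite ler_norml => /andP [h1 h2]; split; lra.
Qed.

Lemma block_nonneg (R : realType) n (S C : 'M[R]_n) g :
  (forall i j, `|C i j| <= S i j) -> `|g| <= 1 -> nonneg_mx (block_mx2 S C g).
Proof.
move=> H hg r c; rewrite mxE.
have [h1 h2] := pm_nonneg (H (block_idx r) (block_idx c)) hg.
by case: ifP => _; rewrite divr_ge0.
Qed.

Theorem theorem3 (R : realType) (n : nat) (S C : 'M[R]_n)
    (lam mu : seq R[i]) (gamma : R) :
  0 <= gamma <= 1 ->
  (forall i j, `|C i j| <= S i j) ->
  realizes S lam -> realizes C mu ->
  nonneg_mx ((2%:R)^-1 *: (S + gamma *: C)) /\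
  nonneg_mx ((2%:R)^-1 *: (S - gamma *: C)) /\
  nonneg_mx (block_mx2 S C gamma) /\
  nonneg_mx (block_mx2 S C (- gamma)) /\
  realizes (block_mx2 S C gamma) (lam ++ [seq gamma%:C * z | z <- mu]) /\
  realizes (block_mx2 S C (- gamma)) (lam ++ [seq - (gamma%:C * z) | z <- mu]).
Proof.
move=> /andP [g0 g1] H HS HC.
have hg : `|gamma| <= 1 by rewrite ger0_norm.
have hg' : `|- gamma| <= 1 by rewrite normrN ger0_norm.
split; [|split; [|split; [|split; [|split]]]].
- move=> i j; rewrite !mxE; have [h1 h2] := pm_nonneg (H i j) hg.
  by rewrite mulr_ge0 // invr_ge0.
- move=> i j; rewrite !mxE; have [h1 h2] := pm_nonneg (H i j) hg.
  by rewrite mulr_ge0 // ?invr_ge0 // -mulNr mulrN.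
- exact: block_nonneg.
- exact: block_nonneg.
- exact: realize_block.
- have -> : [seq - (gamma%:C * z) | z <- mu] = [seq (- gamma)%:C * z | z <- mu].
    by apply: eq_map => z; rewrite rmorphN mulNr.
  exact: realize_block.
Qed.
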